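(* Let $s_\mathrm{in}>0$, let $\mu:[0,s_\mathrm{in}]\to[0,\infty)$ be continuously differentiable with $\mu(0)=0$, fix $\bar s\in(0,s_\mathrm{in})$ and numbers $0<D_{\min}<\mu(\bar s)<D_{\max}$. Consider the chemostat $\dot s=-\mu(s)b+D(s_\mathrm{in}-s)$, $\dot b=\mu(s)b-Db$ with the dynamic feedback $$D=\operatorname{sat}_{[D_{\min},D_{\max}]}\big(\bar D-G_1(s-\bar s)\big),\qquad \frac{d}{dt}\bar D=-G_2(s-\bar s)(\bar D-D_{\min})(D_{\max}-\bar D).$$ Then for any constants $G_1>0$, $G_2>0$ with $G_1>-\mu'(\bar s)$, the equilibrium $(s,b,\bar D)=(\bar s,\,s_\mathrm{in}-\bar s,\,\mu(\bar s))$ of the closed-loop system is locally exponentially stable; in particular, for solutions starting sufficiently close to it, $s(t)\to\bar s$ and $\lim_{t\to\infty}\bar D(t)=\lim_{t\to\infty}D(t)=\mu(\bar s)$.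
   Context: The saturation function is $\operatorname{sat}_{[D_{\min},D_{\max}]}(x)=D_{\max}$ if $x>D_{\max}$, $=x$ if $x\in[D_{\min},D_{\max}]$, $=D_{\min}$ if $x<D_{\min}$. *)

(* Defs.v *)
From Stdlib Require Import Reals Lra.
Open Scope R_scope.

Definition sat (Dmin Dmax x : R) : R :=
  if Rlt_dec Dmax x then Dmax else if Rlt_dec x Dmin then Dmin else x.

Definition cont_on_at (f : R -> R) (a b x : R) : Prop :=
  forall eps, 0 < eps -> exists delta, 0 < delta /\
    forall y, a <= y <= b -> Rabs (y - x) < delta -> Rabs (f y - f x) < eps.

(* mu is continuously differentiable on [0, s_in] with derivative dmu:
   mu and dmu continuous on [0,s_in], and mu' = dmu on (0,s_in)
   (one-sided derivatives at the endpoints then follow). *)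
Definition C1_on (mu dmu : R -> R) (a b : R) : Prop :=
  (forall x, a <= x <= b -> cont_on_at mu a b x) /\
  (forall x, a <= x <= b -> cont_on_at dmu a b x) /\
  (forall x, a < x < b -> derivable_pt_lim mu x (dmu x)).

Definition Dfb (Dmin Dmax G1 sbar s Dbar : R) : R :=
  sat Dmin Dmax (Dbar - G1 * (s - sbar)).

Definition is_solution (mu : R -> R) (s_in sbar Dmin Dmax G1 G2 : R)
    (s b Dbar : R -> R) : Prop :=
  (forall x : R -> R, (x = s \/ x = b \/ x = Dbar) ->
     forall eps, 0 < eps -> exists delta, 0 < delta /\
       forall t, 0 <= t < delta -> Rabs (x t - x 0) < eps) /\
  (forall t, 0 < t ->
     let D := Dfb Dmin Dmax G1 sbar (s t) (Dbar t) in
     derivable_pt_lim s t (- mu (s t) * b t + D * (s_in - s t)) /\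
     derivable_pt_lim b t (mu (s t) * b t - D * b t) /\
     derivable_pt_lim Dbar t
       (- G2 * (s t - sbar) * (Dbar t - Dmin) * (Dmax - Dbar t))).

Definition dist3 (x1 y1 z1 x2 y2 z2 : R) : R :=
  sqrt ((x1 - x2)^2 + (y1 - y2)^2 + (z1 - z2)^2).

Definition tends_to_infty (f : R -> R) (l : R) : Prop :=
  forall eps, 0 < eps -> exists T, forall t, T <= t -> Rabs (f t - l) < eps.

(* Main.v *)
Require Import Defs.
From Stdlib Require Import Reals Lra Psatz.
Open Scope R_scope.

Lemma small_prod u v eps : Rabs u <= eps -> Rabs v <= eps -> eps <= 1 -> Rabs (u*v) <= eps.
Proof. intros. rewrite Rabs_mult. assert (0 <= Rabs u) by apply Rabs_pos.
  assert (0 <= Rabs v) by apply Rabs_pos. nra. Qed.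

Lemma bt c u eps : Rabs u <= eps -> c*u <= Rabs c * eps /\ -(c*u) <= Rabs c * eps.
Proof. intros H. assert (Rabs (c*u) <= Rabs c * eps).
  { rewrite Rabs_mult. apply Rmult_le_compat_l; auto. apply Rabs_pos. }
  split; [apply Rle_trans with (2:=H0); apply Rle_abs|].
  apply Rle_trans with (2:=H0). rewrite <- Rabs_Ropp. apply Rle_abs. Qed.

Definition A1 k a q p beta G2 c0 e d x ph :=
  (-2*k*a)*ph + (-2*k)*d + (2*k*q)*e + (2*k)*(ph*e) + (-2*k*p)*x + (-2*k)*(ph*x)
  + (-2*beta*q)*d + (-2*beta)*(ph*d) + (2*beta*G2*c0)*d + (-2*beta*G2)*(d*d).
Definition K1 k a q p beta G2 c0 :=
  Rabs (-2*k*a) + Rabs (-2*k) + Rabs (2*k*q) + Rabs (2*k) + Rabs (-2*k*p) + Rabs (-2*k)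
  + Rabs (-2*beta*q) + Rabs (-2*beta) + Rabs (2*beta*G2*c0) + Rabs (-2*beta*G2).
Definition A2 a p beta G2 c0 d x ph :=
  (2*beta*a)*ph + (2*beta)*d + (2*beta*p)*x + (2*beta)*(ph*x) + (-2*a*G2*c0)*d + (2*a*G2)*(d*d).
Definition K2 a p beta G2 c0 :=
  Rabs (2*beta*a) + Rabs (2*beta) + Rabs (2*beta*p) + Rabs (2*beta) + Rabs (-2*a*G2*c0) + Rabs (2*a*G2).
Definition A3 gam G1 e d := (-2*gam)*d + (2*gam*G1)*e.
Definition K3 gam G1 := Rabs (-2*gam) + Rabs (2*gam*G1).

Lemma A1_bnd k a q p beta G2 c0 e d x ph eps :
  Rabs e <= eps -> Rabs d <= eps -> Rabs x <= eps -> Rabs ph <= eps -> eps <= 1 ->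
  Rabs (A1 k a q p beta G2 c0 e d x ph) <= eps * K1 k a q p beta G2 c0.
Proof.
  intros He Hd Hx Hp H1.
  pose proof (small_prod ph e eps Hp He H1). pose proof (small_prod ph x eps Hp Hx H1).
  pose proof (small_prod ph d eps Hp Hd H1). pose proof (small_prod d d eps Hd Hd H1).
  pose proof (bt (-2*k*a) ph eps Hp). pose proof (bt (-2*k) d eps Hd).
  pose proof (bt (2*k*q) e eps He). pose proof (bt (2*k) (ph*e) eps H).
  pose proof (bt (-2*k*p) x eps Hx). pose proof (bt (-2*k) (ph*x) eps H0).
  pose proof (bt (-2*beta*q) d eps Hd). pose proof (bt (-2*beta) (ph*d) eps H2).
  pose proof (bt (2*beta*G2*c0) d eps Hd). pose proof (bt (-2*beta*G2) (d*d) eps H3).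
  unfold A1, K1. apply Rabs_le. lra.
Qed.

Lemma A2_bnd a p beta G2 c0 d x ph eps :
  Rabs d <= eps -> Rabs x <= eps -> Rabs ph <= eps -> eps <= 1 ->
  Rabs (A2 a p beta G2 c0 d x ph) <= eps * K2 a p beta G2 c0.
Proof.
  intros Hd Hx Hp H1.
  pose proof (small_prod ph x eps Hp Hx H1). pose proof (small_prod d d eps Hd Hd H1).
  pose proof (bt (2*beta*a) ph eps Hp). pose proof (bt (2*beta) d eps Hd).
  pose proof (bt (2*beta*p) x eps Hx). pose proof (bt (2*beta) (ph*x) eps H).
  pose proof (bt (-2*a*G2*c0) d eps Hd). pose proof (bt (2*a*G2) (d*d) eps H0).
  unfold A2, K2. apply Rabs_le. lra.
Qed.

Lemma A3_bnd gam G1 e d eps :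
  Rabs e <= eps -> Rabs d <= eps ->
  Rabs (A3 gam G1 e d) <= eps * K3 gam G1.
Proof.
  intros He Hd.
  pose proof (bt (-2*gam) d eps Hd). pose proof (bt (2*gam*G1) e eps He).
  unfold A3, K3. apply Rabs_le. lra.
Qed.

Lemma alg a m p G1 G2 Dmin Dmax k q c0 beta gam omega eps e d x ph :
  k = G2*(m-Dmin)*(Dmax-m) -> q = G1 + p -> c0 = Dmax + Dmin - 2*m ->
  0 < a -> 0 < k -> 0 < q -> 0 < m -> 0 < beta ->
  beta*(2*k+2*a*q^2) = a*k*q/2 ->
  2*gam*m = 2*(beta*m^2/a) + 2*(k*m^2/(a*q)) + m ->
  omega <= a*k*q -> omega <= beta*a -> omega <= m ->
  Rabs e <= eps -> Rabs d <= eps -> Rabs x <= eps -> Rabs ph <= eps -> eps <= 1 ->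
  eps*(K1 k a q p beta G2 c0 + K2 a p beta G2 c0 + K3 gam G1) <= omega/2 ->
  let ed := (d - G1*e - (p+ph)*e)*(a-e) - (m+(p+ph)*e)*x in
  let dd := -G2*e*(m+d-Dmin)*(Dmax-m-d) in
  let xd := -(m+d-G1*e)*x in
  2*k*e*ed + 2*a*d*dd - 2*beta*(ed*d + e*dd) + 2*gam*x*xd <= -(omega/2)*(e^2+d^2+x^2).
Proof.
  intros Hk Hq Hc0 Ha Hk0 Hq0 Hm Hb Hbeta Hgam Ho1 Ho2 Ho3 He Hd Hx Hp H1 Heps ed dd xd.
  set (Q := -(2*a*k*q - 2*beta*k)*e^2 - 2*beta*a*d^2 - 2*gam*m*x^2 + 2*beta*a*q*e*d
            - 2*k*m*e*x + 2*beta*m*x*d).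
  assert (Id : 2*k*e*ed + 2*a*d*dd - 2*beta*(ed*d + e*dd) + 2*gam*x*xd =
     Q + e*e*A1 k a q p beta G2 c0 e d x ph + e*d*A2 a p beta G2 c0 d x ph + x*x*A3 gam G1 e d).
  { unfold Q, ed, dd, xd, A1, A2, A3. subst k q c0. ring. }
  assert (S1 : 2*beta*a*q*e*d <= beta*a/2*d^2 + 2*beta*a*q^2*e^2).
  { assert (0 <= beta*a*(d-2*q*e)^2) by (apply Rmult_le_pos; [nra| apply pow2_ge_0]). nra. }
  assert (S2 : 2*beta*m*x*d <= beta*a/2*d^2 + 2*(beta*m^2/a)*x^2).
  { apply Rmult_le_reg_l with a; [lra|].
    replace (a * (beta*a/2*d^2 + 2*(beta*m^2/a)*x^2)) with (beta*a^2/2*d^2 + 2*beta*m^2*x^2) by (field; lra).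
    assert (0 <= beta*(a*d-2*m*x)^2) by (apply Rmult_le_pos; [lra| apply pow2_ge_0]). nra. }
  assert (S3 : - 2*k*m*e*x <= a*k*q/2*e^2 + 2*(k*m^2/(a*q))*x^2).
  { apply Rmult_le_reg_l with (a*q); [nra|].
    replace (a*q * (a*k*q/2*e^2 + 2*(k*m^2/(a*q))*x^2)) with (k*(a*q)^2/2*e^2 + 2*k*m^2*x^2) by (field; lra).
    assert (0 <= k*(a*q*e+2*m*x)^2) by (apply Rmult_le_pos; [lra| apply pow2_ge_0]). nra. }
  assert (QB : Q <= -(omega)*(e^2+d^2+x^2)).
  { assert (Q <= -(a*k*q)*e^2 - beta*a*d^2 - m*x^2) by (unfold Q; nra).
    assert (0 <= e^2) by apply pow2_ge_0. assert (0 <= d^2) by apply pow2_ge_0.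
    assert (0 <= x^2) by apply pow2_ge_0. nra. }
  pose proof (A1_bnd k a q p beta G2 c0 e d x ph eps He Hd Hx Hp H1) as B1.
  pose proof (A2_bnd a p beta G2 c0 d x ph eps Hd Hx Hp H1) as B2.
  pose proof (A3_bnd gam G1 e d eps He Hd) as B3.
  set (a1 := A1 k a q p beta G2 c0 e d x ph) in *.
  set (a2 := A2 a p beta G2 c0 d x ph) in *.
  set (a3 := A3 gam G1 e d) in *.
  set (k1 := K1 k a q p beta G2 c0) in *.
  set (k2 := K2 a p beta G2 c0) in *.
  set (k3 := K3 gam G1) in *.
  assert (T1 : e*e*a1 <= e*e*(eps*k1)).
  { apply Rmult_le_compat_l. nra. apply Rle_trans with (2:=B1); apply Rle_abs. }
  assert (T3 : x*x*a3 <= x*x*(eps*k3)).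
  { apply Rmult_le_compat_l. nra. apply Rle_trans with (2:=B3); apply Rle_abs. }
  assert (T2 : e*d*a2 <= (e^2+d^2)/2*(eps*k2)).
  { apply Rle_trans with (Rabs (e*d) * Rabs a2).
    rewrite <- Rabs_mult. apply Rle_abs.
    apply Rmult_le_compat. apply Rabs_pos. apply Rabs_pos.
    assert (0 <= (e-d)^2) by apply pow2_ge_0. assert (0 <= (e+d)^2) by apply pow2_ge_0. apply Rabs_le. split; nra. exact B2. }
  assert (0 <= k1) by (unfold k1, K1; repeat (apply Rplus_le_le_0_compat || apply Rabs_pos)).
  assert (0 <= k2) by (unfold k2, K2; repeat (apply Rplus_le_le_0_compat || apply Rabs_pos)).
  assert (0 <= k3) by (unfold k3, K3; repeat (apply Rplus_le_le_0_compat || apply Rabs_pos)).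
  assert (0 <= eps) by (apply Rle_trans with (Rabs e); [apply Rabs_pos|auto]).
  assert (0 <= e^2) by apply pow2_ge_0. assert (0 <= d^2) by apply pow2_ge_0.
  assert (0 <= x^2) by apply pow2_ge_0.
  assert (e*e*(eps*k1) + (e^2+d^2)/2*(eps*k2) + x*x*(eps*k3) <= eps*(k1+k2+k3)*(e^2+d^2+x^2)).
  { assert (0 <= eps*k1) by nra. assert (0 <= eps*k2) by nra. assert (0 <= eps*k3) by nra. nra. }
  assert (eps*(k1+k2+k3)*(e^2+d^2+x^2) <= omega/2*(e^2+d^2+x^2)) by
    (apply Rmult_le_compat_r; [lra| exact Heps]).
  rewrite Id. lra.
Qed.

Lemma cont_eps f x l : derivable_pt_lim f x l -> forall eps, 0<eps ->
  exists del, 0<del /\ forall y, Rabs (y - x) < del -> Rabs (f y - f x) < eps.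
Proof.
  intros H eps He.
  pose proof (derivable_continuous_pt f x (exist _ l H)) as C.
  destruct (C eps He) as [alp [Ha Hb]].
  exists alp; split; [lra|]. intros y Hy.
  destruct (Req_dec y x) as [E|E].
  - subst. rewrite Rminus_diag, Rabs_R0; lra.
  - apply (Hb y). split. split. exact I. auto. exact Hy.
Qed.

Lemma barrier (g g' : R -> R) (K : R) :
  (forall eps, 0<eps -> exists delta, 0<delta /\ forall t, 0<=t<delta -> Rabs (g t - g 0) < eps) ->
  (forall t, 0 < t -> derivable_pt_lim g t (g' t)) ->
  (forall t, 0 < t -> g t < K -> g' t <= 0) ->
  g 0 < K ->
  forall t, 0 <= t -> g t <= g 0.
Proof.
  intros RC Dg Sg g0K.
  assert (Mono: forall u v, 0 < u < v -> (forall c, u <= c <= v -> g c < K) -> g v <= g u).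
  { intros u v Huv Hc. destruct (MVT_cor2 g g' u v) as [c [Ec Hc2]]; [lra| |].
    intros c Hc'. apply Dg. lra.
    assert (g' c <= 0) by (apply Sg; [lra| apply Hc; lra]).
    assert (g' c * (v - u) <= 0). { nra. }
    lra. }
  assert (RCt: forall t0 eps, 0 <= t0 -> 0 < eps -> exists del, 0 < del /\
     forall y, t0 <= y < t0 + del -> Rabs (g y - g t0) < eps).
  { intros t0 eps H0 He. destruct (Req_dec t0 0) as [Z|Z].
    - subst. destruct (RC eps He) as [d [Hd1 Hd2]]. exists d; split; auto.
      intros y Hy; apply Hd2; lra.
    - destruct (cont_eps g t0 (g' t0) (Dg t0 ltac:(lra)) eps He) as [d [Hd1 Hd2]].
      exists d; split; auto. intros y Hy; apply Hd2. rewrite Rabs_right; lra. }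
  intros t Ht. destruct (Rle_or_lt (g t) (g 0)) as [|Hgt]; auto. exfalso.
  assert (tpos : 0 < t). { destruct Ht as [|E]; auto. subst. lra. }
  set (L := (g 0 + Rmin (g t) K)/2).
  assert (HL1 : g 0 < L) by (unfold L; apply Rmin_case; lra).
  assert (HL2 : L < g t) by (unfold L; generalize (Rmin_l (g t) K); lra).
  assert (HL3 : L < K) by (unfold L; generalize (Rmin_r (g t) K); lra).
  set (E := fun tau => 0 <= tau <= t /\ forall u, 0 <= u <= tau -> g u < L).
  destruct (completeness E) as [t0 [Hub Hlub]].
  { exists t. intros x [Hx _]; lra. }
  { exists 0. split; [lra|]. intros u Hu. replace u with 0 by lra. lra. }
  assert (Ht0a : 0 <= t0). { apply Hub. split; [lra|]. intros u Hu. replace u with 0 by lra. lra. }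
  assert (Ht0b : t0 <= t). { apply Hlub. intros x [Hx _]; lra. }
  assert (F1 : forall u, 0 <= u < t0 -> g u < L).
  { intros u Hu. destruct (Rle_or_lt t0 u) as [|Hlt]; [lra|].
    assert (~ is_upper_bound E u).
    { intro HU. specialize (Hlub u HU). lra. }
    apply Classical_Pred_Type.not_all_ex_not in H. destruct H as [tau Htau].
    apply Classical_Prop.imply_to_and in Htau. destruct Htau as [[Ha Hb] Hc].
    apply Hb. lra. }
  assert (F2 : L <= g t0).
  { destruct (Rle_or_lt L (g t0)) as [|Hlt]; auto. exfalso.
    destruct (RCt t0 (L - g t0) Ht0a ltac:(lra)) as [d [Hd1 Hd2]].
    assert (t0 < t). { destruct Ht0b as [|Eq]; auto. subst t0. lra. }
    set (tau := Rmin (t0 + d/2) t).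
    assert (E tau).
    { split. unfold tau; split; [apply Rmin_case; lra | apply Rmin_r].
      intros u Hu. destruct (Rlt_or_le u t0). apply F1; lra.
      assert (tau <= t0 + d/2) by apply Rmin_l.
      specialize (Hd2 u ltac:(lra)). apply Rabs_def2 in Hd2. lra. }
    specialize (Hub tau H0). unfold tau in Hub. revert Hub. apply Rmin_case; lra. }
  assert (F3 : 0 < t0). { destruct Ht0a as [|Eq]; auto. subst t0. lra. }
  assert (F2' : g t0 <= L).
  { destruct (Rle_or_lt (g t0) L) as [|Hlt]; auto. exfalso.
    destruct (cont_eps g t0 (g' t0) (Dg t0 F3) (g t0 - L) ltac:(lra)) as [d [Hd1 Hd2]].
    set (u := Rmax (t0 - d/2) (t0/2)).
    assert (Hu1 : t0 - d/2 <= u) by apply Rmax_l.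
    assert (Hu2 : t0/2 <= u) by apply Rmax_r.
    assert (Hu3 : u < t0) by (unfold u; apply Rmax_case; lra).
    specialize (Hd2 u). rewrite Rabs_left in Hd2 by lra. specialize (Hd2 ltac:(lra)).
    apply Rabs_def2 in Hd2. specialize (F1 u ltac:(lra)). lra. }
  assert (F4 : g t0 <= g 0).
  { destruct (Rle_or_lt (g t0) (g 0)) as [|Hlt]; auto. exfalso.
    destruct (RC (g t0 - g 0) ltac:(lra)) as [d [Hd1 Hd2]].
    set (u := Rmin (d/2) (t0/2)).
    assert (Hu1 : u <= d/2) by apply Rmin_l.
    assert (Hu2 : u <= t0/2) by apply Rmin_r.
    assert (Hu3 : 0 < u) by (unfold u; apply Rmin_case; lra).
    specialize (Hd2 u ltac:(lra)). apply Rabs_def2 in Hd2.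
    assert (g t0 <= g u).
    { apply Mono. lra. intros c Hc. destruct (Rlt_or_le c t0). specialize (F1 c ltac:(lra)); lra. replace c with t0 by lra; lra. }
    lra. }
  lra.
Qed.

Definition RC0 (f : R -> R) := forall eps, 0 < eps -> exists delta, 0 < delta /\
   forall t, 0 <= t < delta -> Rabs (f t - f 0) < eps.

Lemma RC_lim f : RC0 f -> limit1_in f (fun t => 0 <= t) (f 0) 0.
Proof. intros H eps He. destruct (H eps He) as [d [Hd1 Hd2]]. exists d. split; [lra|].
  intros x [Hx1 Hx2]. simpl in *. unfold R_dist in *. apply Hd2. rewrite Rminus_0_r in Hx2.
  rewrite Rabs_right in Hx2; lra. Qed.

Lemma lim_RC f : limit1_in f (fun t => 0 <= t) (f 0) 0 -> RC0 f.
Proof. intros H eps He. destruct (H eps He) as [d [Hd1 Hd2]]. exists d. split; [lra|].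
  intros x Hx. apply (Hd2 x). split. lra. simpl. unfold R_dist. rewrite Rminus_0_r, Rabs_right; lra. Qed.

Lemma lim_const c (D : R -> Prop) x0 : limit1_in (fun _ => c) D c x0.
Proof. apply (limit_free (fun _ => c) D x0 x0). Qed.

Lemma lim_sq f D l x0 : limit1_in f D l x0 -> limit1_in (fun x => f x ^ 2) D (l^2) x0.
Proof. intros H. simpl. replace (l * (l*1)) with (l*l) by ring.
  eapply limit1_imp with (D := D); [|]. auto.
  assert (limit1_in (fun x => f x * f x) D (l*l) x0) by (apply limit_mul; auto).
  intros eps He; destruct (H0 eps He) as [a [Ha Hb]]; exists a; split; auto.
  intros x Hx. specialize (Hb x Hx). simpl in *. replace (f x * (f x * 1)) with (f x * f x) by ring. auto.
Qed.

Lemma Deq f x l1 l2 : derivable_pt_lim f x l1 -> l1 = l2 -> derivable_pt_lim f x l2.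
Proof. intros H E; subst; auto. Qed.
Lemma Dp f g x a b : derivable_pt_lim f x a -> derivable_pt_lim g x b ->
  derivable_pt_lim (fun y => f y + g y) x (a+b).
Proof. intros; apply (derivable_pt_lim_plus f g); auto. Qed.
Lemma Dm f g x a b : derivable_pt_lim f x a -> derivable_pt_lim g x b ->
  derivable_pt_lim (fun y => f y - g y) x (a-b).
Proof. intros; apply (derivable_pt_lim_minus f g); auto. Qed.
Lemma Dmul f g x a b : derivable_pt_lim f x a -> derivable_pt_lim g x b ->
  derivable_pt_lim (fun y => f y * g y) x (a * g x + f x * b).
Proof. intros; apply (derivable_pt_lim_mult f g); auto. Qed.
Lemma Dc c x : derivable_pt_lim (fun _ => c) x 0.
Proof. apply derivable_pt_lim_const. Qed.
Lemma Dsq f x a : derivable_pt_lim f x a -> derivable_pt_lim (fun y => f y ^ 2) x (2 * f x * a).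
Proof. intros H. apply Deq with (INR 2 * f x ^ 1 * a).
  apply (derivable_pt_lim_comp f (fun u => u^2) x a (INR 2 * f x ^ 1)). auto.
  apply derivable_pt_lim_pow. simpl. ring. Qed.
Lemma Dexp c x : derivable_pt_lim (fun y => exp (c*y)) x (c * exp (c*x)).
Proof. apply Deq with (exp (c*x) * c).
  apply (derivable_pt_lim_comp (fun y => c*y) exp x c (exp (c*x))).
  apply Deq with (0 * x + c * 1). apply (Dmul (fun _ => c) (fun y => y)). apply Dc. apply derivable_pt_lim_id. ring.
  apply derivable_pt_lim_exp. ring. Qed.

Lemma mu_exp (mu : R -> R) y0 l eps : derivable_pt_lim mu y0 l -> 0 < eps ->
  exists del, 0 < del /\ forall y, Rabs (y - y0) < del ->
    exists ph, Rabs ph <= eps /\ mu y = mu y0 + (l + ph)*(y - y0).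
Proof.
  intros H He. destruct (H eps He) as [del Hd]. exists del. split. apply cond_pos.
  intros y Hy. destruct (Req_dec y y0) as [E|E].
  - subst. exists 0. split. rewrite Rabs_R0; lra. ring.
  - specialize (Hd (y - y0) ltac:(lra) Hy). replace (y0 + (y - y0)) with y in Hd by ring.
    exists ((mu y - mu y0)/(y-y0) - l). split. lra. field. lra.
Qed.

Lemma decay C lam eps : 0 <= C -> 0 < lam -> 0 < eps ->
  exists T, 0 <= T /\ forall t, T <= t -> C * exp (-lam*t) < eps.
Proof.
  intros HC Hl He. exists (Rmax 0 (ln ((C+1)/eps)/lam)). split. apply Rmax_l.
  intros t Ht. assert (H1 : ln ((C+1)/eps)/lam <= t) by (eapply Rle_trans; [apply Rmax_r|exact Ht]).
  assert (H2 : ln ((C+1)/eps) <= lam*t).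
  { apply Rmult_le_reg_r with (/lam). apply Rinv_0_lt_compat; lra.
    replace (lam*t*/lam) with t by (field; lra). exact H1. }
  assert (H3 : (C+1)/eps <= exp (lam*t)).
  { rewrite <- (exp_ln ((C+1)/eps)) by (apply Rdiv_lt_0_compat; lra).
    destruct H2 as [H2|H2]. left; apply exp_increasing; auto. rewrite H2; lra. }
  assert (H4 : exp (-lam*t) * exp (lam*t) = 1).
  { rewrite <- exp_plus. replace (-lam*t + lam*t) with 0 by ring. apply exp_0. }
  assert (0 < exp (-lam*t)) by apply exp_pos.
  assert ((C+1)/eps * eps = C+1) by (field; lra).
  apply Rmult_lt_reg_r with (exp (lam*t)). apply exp_pos.
  replace (C * exp (- lam * t) * exp (lam * t)) with C by (rewrite Rmult_assoc, H4; ring).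
  nra.
Qed.

Lemma abs_le_sqrt u X : u^2 <= X -> Rabs u <= sqrt X.
Proof. intros H. rewrite <- sqrt_Rsqr_abs. apply sqrt_le_1_alt. unfold Rsqr. simpl in H. lra. Qed.

Lemma sq_abs_lt u r : u^2 < r^2 -> 0 < r -> Rabs u < r.
Proof. intros H Hr. destruct (Rle_or_lt r (Rabs u)) as [H1|H1]; auto.
  assert (Rabs u ^2 = u^2). { unfold Rabs; destruct (Rcase_abs u); ring. }
  nra. Qed.

Lemma sqrt_lt_sq X d : 0 <= X -> sqrt X < d -> X < d^2.
Proof. intros H1 H2. assert (0 <= sqrt X) by apply sqrt_pos.
  pose proof (sqrt_sqrt X H1). nra. Qed.

Lemma SSd e y d : e^2+d^2+(y+e)^2 <= 3*(e^2+y^2+d^2) /\ e^2+y^2+d^2 <= 3*(e^2+d^2+(y+e)^2).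
Proof. assert (0 <= (y-e)^2) by apply pow2_ge_0. assert (0 <= (y+2*e)^2) by apply pow2_ge_0.
  assert (0 <= e^2) by apply pow2_ge_0. assert (0 <= d^2) by apply pow2_ge_0. split; nra. Qed.

Lemma Dopp f x a : derivable_pt_lim f x a -> derivable_pt_lim (fun y => - f y) x (- a).
Proof. intros; apply (derivable_pt_lim_opp f); auto. Qed.

Lemma sat_id Dmin Dmax x : Dmin <= x <= Dmax -> sat Dmin Dmax x = x.
Proof. intros H. unfold sat. destruct (Rlt_dec Dmax x); [lra|]. destruct (Rlt_dec x Dmin); lra. Qed.

Theorem proposition2
  (s_in : R) (mu dmu : R -> R) (sbar Dmin Dmax G1 G2 : R)
  (Hsin : 0 < s_in)
  (Hmu_C1 : C1_on mu dmu 0 s_in)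
  (Hmu_nonneg : forall x, 0 <= x <= s_in -> 0 <= mu x)
  (Hmu0 : mu 0 = 0)
  (Hsbar : 0 < sbar < s_in)
  (HDmin : 0 < Dmin) (HDlo : Dmin < mu sbar) (HDhi : mu sbar < Dmax)
  (HG1 : 0 < G1) (HG2 : 0 < G2) (HG1mu : G1 > - dmu sbar) :
  exists delta M lam : R, 0 < delta /\ 0 < M /\ 0 < lam /\
    forall s b Dbar : R -> R,
      is_solution mu s_in sbar Dmin Dmax G1 G2 s b Dbar ->
      dist3 (s 0) (b 0) (Dbar 0) sbar (s_in - sbar) (mu sbar) < delta ->
      (forall t, 0 <= t ->
         dist3 (s t) (b t) (Dbar t) sbar (s_in - sbar) (mu sbar)
         <= M * exp (- lam * t) *
            dist3 (s 0) (b 0) (Dbar 0) sbar (s_in - sbar) (mu sbar)) /\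
      tends_to_infty s sbar /\
      tends_to_infty Dbar (mu sbar) /\
      tends_to_infty (fun t => Dfb Dmin Dmax G1 sbar (s t) (Dbar t)) (mu sbar).
Proof.
  destruct Hmu_C1 as [_ [_ Hder]].
  assert (Hd0 : derivable_pt_lim mu sbar (dmu sbar)) by (apply Hder; lra).
  set (m := mu sbar) in *. set (p := dmu sbar) in *. set (a := s_in - sbar).
  assert (Ha : 0 < a) by (unfold a; lra).
  assert (Hm : 0 < m) by lra.
  set (q := G1 + p). assert (Hq : 0 < q) by (unfold q; lra).
  set (k := G2*(m-Dmin)*(Dmax-m)).
  assert (Hk : 0 < k) by (unfold k; apply Rmult_lt_0_compat; [apply Rmult_lt_0_compat|]; lra).
  set (c0 := Dmax + Dmin - 2*m).
  set (W := k + a*q^2). assert (HW : 0 < W) by (unfold W; nra).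
  set (beta := a*k*q/(4*W)).
  assert (Hbeta : 0 < beta) by (unfold beta; apply Rdiv_lt_0_compat; [|lra]; apply Rmult_lt_0_compat; [apply Rmult_lt_0_compat|]; lra).
  assert (HbW : beta*(2*k+2*a*q^2) = a*k*q/2) by (unfold beta; replace (2*k+2*a*q^2) with (2*W) by (unfold W; ring); field; lra).
  set (gam := beta*m/a + k*m/(a*q) + 1/2).
  assert (Hgam : 0 < gam).
  { unfold gam. assert (0 < beta*m/a) by (apply Rdiv_lt_0_compat; nra).
    assert (0 < k*m/(a*q)) by (apply Rdiv_lt_0_compat; nra). lra. }
  assert (Hgam2 : 2*gam*m = 2*(beta*m^2/a) + 2*(k*m^2/(a*q)) + m) by (unfold gam; field; lra).
  assert (Hb2 : 4*beta^2 <= a*k).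
  { assert (E1 : 16*beta^2*W^2 = (a*k*q)^2) by (unfold beta; field; lra).
    assert (E2 : 4*k*(a*q^2) <= W^2) by (unfold W; assert (0 <= (k - a*q^2)^2) by apply pow2_ge_0; nra).
    assert (0 < a*k*q^2) by (apply Rmult_lt_0_compat; nra).
    assert (64*beta^2*(a*k*q^2) <= (a*k*q^2)*(a*k)).
    { replace ((a*k*q^2)*(a*k)) with ((a*k*q)^2) by ring. rewrite <- E1.
      assert (0 <= 16*beta^2) by nra. 
      replace (64*beta^2*(a*k*q^2)) with (16*beta^2*(4*k*(a*q^2))) by ring.
      apply Rmult_le_compat_l; auto. }
    assert (64*beta^2 <= a*k).
    { apply Rmult_le_reg_l with (a*k*q^2); [auto|]. lra. }
    nra. }
  set (omega := Rmin (a*k*q) (Rmin (beta*a) m)).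
  assert (Ho1 : omega <= a*k*q) by apply Rmin_l.
  assert (Ho2 : omega <= beta*a) by (eapply Rle_trans; [apply Rmin_r|apply Rmin_l]).
  assert (Ho3 : omega <= m) by (eapply Rle_trans; [apply Rmin_r|apply Rmin_r]).
  assert (Ho : 0 < omega).
  { unfold omega. repeat apply Rmin_case; try nra. apply Rmult_lt_0_compat; [apply Rmult_lt_0_compat|]; lra. }
  set (Ks := K1 k a q p beta G2 c0 + K2 a p beta G2 c0 + K3 gam G1).
  assert (HKs : 0 <= Ks) by (unfold Ks, K1, K2, K3; repeat (apply Rplus_le_le_0_compat || apply Rabs_pos)).
  set (eps := Rmin 1 (omega/(2*(Ks+1)))).
  assert (He1 : eps <= 1) by apply Rmin_l.
  assert (He0 : 0 < eps) by (unfold eps; apply Rmin_case; [lra| apply Rdiv_lt_0_compat; lra]).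
  assert (HeK : eps*Ks <= omega/2).
  { apply Rle_trans with (omega/(2*(Ks+1))*Ks). apply Rmult_le_compat_r; [lra|apply Rmin_r].
    replace (omega/(2*(Ks+1))*Ks) with (omega/2 * (1 - 1/(Ks+1))) by (field; lra).
    assert (0 < 1/(Ks+1)) by (apply Rdiv_lt_0_compat; lra). nra. }
  destruct (mu_exp mu sbar p eps Hd0 He0) as [dl [Hdl Hmuexp]].
  set (rho := Rmin eps (Rmin (dl/2) (Rmin (m-Dmin) (Dmax-m)/(2*(1+G1))))).
  assert (Hr1 : rho <= eps) by apply Rmin_l.
  assert (Hr2 : rho <= dl/2) by (eapply Rle_trans; [apply Rmin_r|apply Rmin_l]).
  assert (Hr3 : rho <= Rmin (m-Dmin) (Dmax-m)/(2*(1+G1))) by (eapply Rle_trans; [apply Rmin_r|apply Rmin_r]).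
  assert (Hmn : 0 < Rmin (m-Dmin) (Dmax-m)) by (apply Rmin_case; lra).
  assert (Hr0 : 0 < rho).
  { unfold rho; apply Rmin_case; [lra|apply Rmin_case; [lra| apply Rdiv_lt_0_compat; lra]]. }
  assert (Hr4 : 2*(1+G1)*rho <= Rmin (m-Dmin) (Dmax-m)).
  { apply Rmult_le_reg_r with (/(2*(1+G1))). apply Rinv_0_lt_compat; lra.
    replace (2*(1+G1)*rho*/(2*(1+G1))) with rho by (field; lra). exact Hr3. }
  assert (Hr5 : Rmin (m-Dmin) (Dmax-m) <= m - Dmin) by apply Rmin_l.
  assert (Hr6 : Rmin (m-Dmin) (Dmax-m) <= Dmax - m) by apply Rmin_r.
  set (CV := k + a + beta + gam).
  set (cV := Rmin (k/2) (Rmin (a/2) gam)).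
  assert (Hc1 : cV <= k/2) by apply Rmin_l.
  assert (Hc2 : cV <= a/2) by (eapply Rle_trans; [apply Rmin_r|apply Rmin_l]).
  assert (Hc3 : cV <= gam) by (eapply Rle_trans; [apply Rmin_r|apply Rmin_r]).
  assert (HcV : 0 < cV) by (unfold cV; repeat apply Rmin_case; lra).
  assert (HCV : 0 < CV) by (unfold CV; lra).
  assert (Vlo : forall e d x, cV*(e^2+d^2+x^2) <= k*e^2 + a*d^2 - 2*beta*(e*d) + gam*x^2).
  { intros e d x. assert (0 <= (k*e-2*beta*d)^2) by apply pow2_ge_0.
    assert (0 <= e^2) by apply pow2_ge_0. assert (0 <= d^2) by apply pow2_ge_0.
    assert (0 <= x^2) by apply pow2_ge_0.
    assert (0 <= k/2*e^2 + a/2*d^2 - 2*beta*(e*d)).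
    { apply Rmult_le_reg_l with k; [lra|]. rewrite Rmult_0_r. nra. }
    nra. }
  assert (Vhi : forall e d x, k*e^2 + a*d^2 - 2*beta*(e*d) + gam*x^2 <= CV*(e^2+d^2+x^2)).
  { intros e d x. assert (0 <= (e+d)^2) by apply pow2_ge_0.
    assert (0 <= e^2) by apply pow2_ge_0. assert (0 <= d^2) by apply pow2_ge_0.
    assert (0 <= x^2) by apply pow2_ge_0. unfold CV. nra. }
  set (Vmax := cV*rho^2).
  set (lam2 := omega/(2*CV)).
  assert (Hl2 : 0 < lam2) by (unfold lam2; apply Rdiv_lt_0_compat; lra).
  assert (Hl2C : lam2*CV = omega/2) by (unfold lam2; field; lra).
  assert (HVmax : 0 < Vmax) by (unfold Vmax; apply Rmult_lt_0_compat; [lra| apply pow_lt; lra]).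
  set (delta := sqrt (Vmax/(3*CV))).
  assert (Hdel2 : delta^2 = Vmax/(3*CV)).
  { unfold delta. simpl. rewrite Rmult_1_r. apply sqrt_sqrt. apply Rlt_le, Rdiv_lt_0_compat; lra. }
  set (M := sqrt (9*CV/cV)).
  assert (HM2 : M^2 = 9*CV/cV).
  { unfold M. simpl. rewrite Rmult_1_r. apply sqrt_sqrt. apply Rlt_le, Rdiv_lt_0_compat; lra. }
  exists delta, M, (lam2/2).
  split. { apply sqrt_lt_R0, Rdiv_lt_0_compat; lra. }
  split. { apply sqrt_lt_R0, Rdiv_lt_0_compat; lra. }
  split. { lra. }
  intros s b Dbar [HRC HD] Hdist.
  set (Vf := fun t => k*(s t - sbar)^2 + a*(Dbar t - m)^2 - 2*beta*((s t - sbar)*(Dbar t - m)) + gam*(s t + b t - s_in)^2).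
  set (SD := fun t => - mu (s t) * b t + Dfb Dmin Dmax G1 sbar (s t) (Dbar t) * (s_in - s t)).
  set (BD := fun t => mu (s t) * b t - Dfb Dmin Dmax G1 sbar (s t) (Dbar t) * b t).
  set (DD := fun t => - G2 * (s t - sbar) * (Dbar t - Dmin) * (Dmax - Dbar t)).
  set (Vd := fun t => 2*k*(s t - sbar)*SD t + 2*a*(Dbar t - m)*DD t
       - 2*beta*(SD t*(Dbar t - m) + (s t - sbar)*DD t) + 2*gam*(s t + b t - s_in)*(SD t + BD t)).
  set (gf := fun t => Vf t * exp (lam2 * t)).
  set (gd := fun t => (Vd t + lam2 * Vf t) * exp (lam2 * t)).
  set (Sd := fun t => (s t - sbar)^2 + (b t - a)^2 + (Dbar t - m)^2).
  set (S := fun t => (s t - sbar)^2 + (Dbar t - m)^2 + (s t + b t - s_in)^2).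
  assert (HVlo : forall t, cV * S t <= Vf t) by (intro t; apply Vlo).
  assert (HVhi : forall t, Vf t <= CV * S t) by (intro t; apply Vhi).
  assert (HSSd : forall t, S t <= 3 * Sd t /\ Sd t <= 3 * S t).
  { intro t. unfold S, Sd. replace (s t + b t - s_in) with ((b t - a) + (s t - sbar)) by (unfold a; ring).
    destruct (SSd (s t - sbar) (b t - a) (Dbar t - m)). split; lra. }
  assert (Region : forall t, Vf t < Vmax ->
     Rabs (s t - sbar) < rho /\ Rabs (Dbar t - m) < rho /\ Rabs (s t + b t - s_in) < rho /\
     Dfb Dmin Dmax G1 sbar (s t) (Dbar t) = m + (Dbar t - m) - G1*(s t - sbar)).
  { intros t Ht. assert (HS : S t < rho^2).
    { apply Rmult_lt_reg_l with cV; auto. specialize (HVlo t). unfold Vmax in Ht. lra. }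
    unfold S in HS.
    assert (0 <= (s t - sbar)^2) by apply pow2_ge_0.
    assert (0 <= (Dbar t - m)^2) by apply pow2_ge_0.
    assert (0 <= (s t + b t - s_in)^2) by apply pow2_ge_0.
    assert (A1' : Rabs (s t - sbar) < rho) by (apply sq_abs_lt; [lra|auto]).
    assert (A2' : Rabs (Dbar t - m) < rho) by (apply sq_abs_lt; [lra|auto]).
    assert (A3' : Rabs (s t + b t - s_in) < rho) by (apply sq_abs_lt; [lra|auto]).
    split; [auto|split;[auto|split;[auto|]]].
    unfold Dfb. rewrite sat_id; [ring|].
    apply Rabs_def2 in A1'. apply Rabs_def2 in A2'. destruct A1', A2'.
    assert (G1*(s t - sbar) < G1*rho) by nra. assert (-(G1*rho) < G1*(s t - sbar)) by nra.
    split; nra. }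
  assert (HV0max : Vf 0 < Vmax).
  {
      assert (Sd 0 < delta^2).
      { apply sqrt_lt_sq. unfold Sd. assert (0 <= (s 0 - sbar)^2) by apply pow2_ge_0; assert (0 <= (b 0 - a)^2) by apply pow2_ge_0; assert (0 <= (Dbar 0 - m)^2) by apply pow2_ge_0; lra. exact Hdist. }
      rewrite Hdel2 in H. destruct (HSSd 0). specialize (HVhi 0).
      assert (CV*S 0 <= CV*(3*Sd 0)) by (apply Rmult_le_compat_l; lra).
      assert (CV*(3*Sd 0) < CV*(3*(Vmax/(3*CV)))) by (apply Rmult_lt_compat_l; lra).
      replace (CV*(3*(Vmax/(3*CV)))) with Vmax in * by (field; lra). lra. }
  assert (Hbar : forall t, 0 <= t -> gf t <= gf 0).
  { apply (barrier gf gd Vmax).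
    - apply lim_RC. unfold gf, Vf.
      assert (Ls : limit1_in s (fun t => 0 <= t) (s 0) 0) by (apply RC_lim; unfold RC0; apply HRC; auto).
      assert (Lb : limit1_in b (fun t => 0 <= t) (b 0) 0) by (apply RC_lim; unfold RC0; apply HRC; auto).
      assert (LD : limit1_in Dbar (fun t => 0 <= t) (Dbar 0) 0) by (apply RC_lim; unfold RC0; apply HRC; auto).
      assert (Le : limit1_in (fun t => exp (lam2*t)) (fun t => 0 <= t) (exp (lam2*0)) 0).
      { apply RC_lim. intros eps' He'. destruct (cont_eps _ 0 _ (Dexp lam2 0) eps' He') as [dd [Hdd1 Hdd2]].
        exists dd. split; auto. intros t' Ht'. apply Hdd2. rewrite Rminus_0_r, Rabs_right; lra. }
      repeat first [ exact Ls | exact Lb | exact LD | exact Le | apply lim_const | apply limit_plus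
                   | apply limit_minus | apply limit_mul | apply lim_sq | apply limit_Ropp ].
    - intros t Ht. pose proof (HD t Ht) as HDt. cbv zeta in HDt. destruct HDt as [Hs [Hb HDb]].
      unfold gf. eapply Deq. apply Dmul. unfold Vf.
      repeat first [ exact Hs | exact Hb | exact HDb | apply Dc | apply Dp | apply Dm | apply Dmul
                   | apply Dsq | apply Dopp ].
      apply Dexp.
      unfold gd, Vd, Vf, SD, BD, DD. cbv beta. ring.
    - intros t Ht Hg. unfold gf in Hg.
      assert (HE : 1 <= exp (lam2*t)).
      { rewrite <- exp_0. left. apply exp_increasing. nra. }
      assert (HV0 : 0 <= Vf t). { specialize (HVlo t). assert (0 <= S t) by (unfold S; assert (0 <= (s t - sbar)^2) by apply pow2_ge_0; assert (0 <= (Dbar t - m)^2) by apply pow2_ge_0; assert (0 <= (s t + b t - s_in)^2) by apply pow2_ge_0; lra).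
        assert (0 <= cV * S t) by (apply Rmult_le_pos; lra). lra. }
      assert (HVt : Vf t < Vmax).
      { assert (Vf t * 1 <= Vf t * exp (lam2*t)) by (apply Rmult_le_compat_l; lra). lra. }
      destruct (Region t HVt) as [R1 [R2 [R3 R4]]].
      destruct (Hmuexp (s t)) as [ph [Hph Hmu]]. lra.
      pose proof (alg a m p G1 G2 Dmin Dmax k q c0 beta gam omega eps (s t - sbar) (Dbar t - m)
         (s t + b t - s_in) ph eq_refl eq_refl eq_refl Ha Hk Hq Hm Hbeta HbW Hgam2 Ho1 Ho2 Ho3
         ltac:(lra) ltac:(lra) ltac:(lra) Hph He1 HeK) as Halg.
      cbv zeta in Halg.
      assert (HVd : Vd t <= -(omega/2)*S t).
      { unfold Vd, SD, BD, DD, S. rewrite R4, Hmu. eapply Rle_trans; [|exact Halg]. right. change (mu sbar) with m. unfold a. ring. }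
      specialize (HVhi t).
      assert (Vd t + lam2 * Vf t <= 0).
      { assert (lam2 * Vf t <= lam2 * (CV * S t)) by (apply Rmult_le_compat_l; lra).
        rewrite <- Rmult_assoc, Hl2C in H. lra. }
      unfold gd. replace 0 with (0 * exp (lam2*t)) by ring.
      apply Rmult_le_compat_r; [left; apply exp_pos| auto].
    - unfold gf. rewrite Rmult_0_r, exp_0, Rmult_1_r. exact HV0max. }
  assert (Sd0pos : 0 <= Sd 0).
  { unfold Sd. assert (0 <= (s 0 - sbar)^2) by apply pow2_ge_0; assert (0 <= (b 0 - a)^2) by apply pow2_ge_0; assert (0 <= (Dbar 0 - m)^2) by apply pow2_ge_0; lra. }
  assert (Hdec : forall t, 0 <= t -> Sd t <= M^2 * exp(-lam2*t) * Sd 0 /\ Vf t < Vmax).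
  { intros t Ht. specialize (Hbar t Ht). unfold gf in Hbar. rewrite Rmult_0_r, exp_0, Rmult_1_r in Hbar.
    assert (EF : exp (lam2*t) * exp (-lam2*t) = 1).
    { rewrite <- exp_plus. replace (lam2*t + -lam2*t) with 0 by ring. apply exp_0. }
    assert (HE : 1 <= exp (lam2*t)).
    { rewrite <- exp_0. destruct Ht as [Ht|Ht]. left. apply exp_increasing. nra. subst t. rewrite Rmult_0_r. lra. }
    assert (HF : 0 < exp (-lam2*t)) by apply exp_pos.
    assert (HS0 : 0 <= S t).
    { unfold S; assert (0 <= (s t - sbar)^2) by apply pow2_ge_0; assert (0 <= (Dbar t - m)^2) by apply pow2_ge_0; assert (0 <= (s t + b t - s_in)^2) by apply pow2_ge_0; lra. }
    assert (HV0 : 0 <= Vf t). { specialize (HVlo t). assert (0 <= cV * S t) by (apply Rmult_le_pos; lra). lra. }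
    split.
    - assert (V1 : Vf t <= Vf 0 * exp (-lam2*t)).
      { replace (Vf t) with (Vf t * exp (lam2*t) * exp (-lam2*t)) by (rewrite Rmult_assoc, EF; ring).
        apply Rmult_le_compat_r; lra. }
      destruct (HSSd 0) as [H01 H02]. destruct (HSSd t) as [Ht1 Ht2].
      specialize (HVhi 0). specialize (HVlo t).
      assert (V2 : Vf 0 * exp (-lam2*t) <= 3*CV*Sd 0 * exp (-lam2*t)).
      { apply Rmult_le_compat_r. lra. assert (CV * S 0 <= CV * (3*Sd 0)) by (apply Rmult_le_compat_l; lra). lra. }
      assert (V3 : cV * Sd t <= 3 * Vf t).
      { assert (cV * Sd t <= cV * (3 * S t)) by (apply Rmult_le_compat_l; lra). lra. }
      apply Rmult_le_reg_l with cV; auto.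
      replace (cV * (M^2 * exp (-lam2*t) * Sd 0)) with (9*CV*Sd 0 * exp(-lam2*t)) by (rewrite HM2; field; lra).
      lra.
    - assert (Vf t * 1 <= Vf t * exp (lam2*t)) by (apply Rmult_le_compat_l; lra). lra. }
  assert (HM0 : 0 <= M) by apply sqrt_pos.
  assert (Hdt : forall t, 0 <= t -> sqrt (Sd t) <= M * exp (-(lam2/2)*t) * sqrt (Sd 0)).
  { intros t Ht. destruct (Hdec t Ht) as [H1 _].
    assert (HF : 0 <= exp (-(lam2/2)*t)) by (left; apply exp_pos).
    rewrite <- (sqrt_pow2 (M * exp (-(lam2/2)*t))) by (apply Rmult_le_pos; auto).
    rewrite <- sqrt_mult by (auto; apply pow2_ge_0).
    apply sqrt_le_1_alt.
    replace ((M * exp (-(lam2/2)*t))^2) with (M^2 * exp (-lam2*t)). exact H1.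
    replace (-lam2*t) with (-(lam2/2)*t + -(lam2/2)*t) by field. rewrite exp_plus. ring. }
  assert (HC0 : 0 <= M * sqrt (Sd 0)) by (apply Rmult_le_pos; [auto|apply sqrt_pos]).
  split.
  { intros t Ht. unfold dist3. change (sqrt (Sd t) <= M * exp (-(lam2/2)*t) * sqrt (Sd 0)). auto. }
  split.
  { intros ep Hep. destruct (decay (M * sqrt (Sd 0)) (lam2/2) ep HC0 ltac:(lra) Hep) as [T [HT0 HT]].
    exists T. intros t Ht. specialize (HT t Ht). specialize (Hdt t ltac:(lra)).
    assert (Rabs (s t - sbar) <= sqrt (Sd t)).
    { apply abs_le_sqrt. unfold Sd. assert (0 <= (b t - a)^2) by apply pow2_ge_0; assert (0 <= (Dbar t - m)^2) by apply pow2_ge_0; lra. }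
    lra. }
  split.
  { intros ep Hep. destruct (decay (M * sqrt (Sd 0)) (lam2/2) ep HC0 ltac:(lra) Hep) as [T [HT0 HT]].
    exists T. intros t Ht. specialize (HT t Ht). specialize (Hdt t ltac:(lra)).
    assert (Rabs (Dbar t - m) <= sqrt (Sd t)).
    { apply abs_le_sqrt. unfold Sd. assert (0 <= (b t - a)^2) by apply pow2_ge_0; assert (0 <= (s t - sbar)^2) by apply pow2_ge_0; lra. }
    lra. }
  { intros ep Hep. destruct (decay ((1+G1) * (M * sqrt (Sd 0))) (lam2/2) ep ltac:(apply Rmult_le_pos; lra) ltac:(lra) Hep) as [T [HT0 HT]].
    exists T. intros t Ht. specialize (HT t Ht). specialize (Hdt t ltac:(lra)).
    destruct (Hdec t ltac:(lra)) as [_ HV].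
    destruct (Region t HV) as [_ [_ [_ R4]]]. rewrite R4.
    assert (E1 : Rabs (s t - sbar) <= sqrt (Sd t)).
    { apply abs_le_sqrt. unfold Sd. assert (0 <= (b t - a)^2) by apply pow2_ge_0; assert (0 <= (Dbar t - m)^2) by apply pow2_ge_0; lra. }
    assert (E2 : Rabs (Dbar t - m) <= sqrt (Sd t)).
    { apply abs_le_sqrt. unfold Sd. assert (0 <= (b t - a)^2) by apply pow2_ge_0; assert (0 <= (s t - sbar)^2) by apply pow2_ge_0; lra. }
    replace (m + (Dbar t - m) - G1 * (s t - sbar) - m) with ((Dbar t - m) + - (G1 * (s t - sbar))) by ring.
    eapply Rle_lt_trans. apply Rabs_triang. rewrite Rabs_Ropp, Rabs_mult, (Rabs_right G1) by lra.
    assert (G1 * Rabs (s t - sbar) <= G1 * sqrt (Sd t)) by (apply Rmult_le_compat_l; lra).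
    assert ((1+G1) * sqrt (Sd t) <= (1+G1) * (M * exp (-(lam2/2)*t) * sqrt (Sd 0))) by (apply Rmult_le_compat_l; lra).
    replace ((1 + G1) * (M * sqrt (Sd 0)) * exp (- (lam2 / 2) * t)) with ((1+G1) * (M * exp (-(lam2/2)*t) * sqrt (Sd 0))) in HT by ring.
    lra. }
Qed.
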